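(* Let $p$ be an odd prime, $r,m$ positive integers and $s\in\{0,1,\dots,mp^{r-1}-1\}$. Then $$\binom{mp^r}{sp}\equiv\binom{mp^{r-1}}{s}\pmod{p^{2r}}.$$ *)

(* Defs.v *)
From mathcomp Require Import all_boot.

(* Main.v *)
Require Import Defs.
From mathcomp Require Import all_boot.
From mathcomp Require Import zify.
Set Implicit Arguments. Unset Strict Implicit.

Lemma ffact_prod X n : X ^_ n = \prod_(0 <= i < n) (X - i).
Proof.
elim: n => [|n IH]; first by rewrite big_geq.
by rewrite ffactnSr IH big_nat_recr.
Qed.

Lemma block p s (g : nat -> nat) : 0 < p ->
  \prod_(0 <= i < s*p | p %| i) g i = \prod_(0 <= j < s) g (j*p).
Proof.
move=> p0; elim: s => [|s IH]; first by rewrite mul0n !big_geq.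
rewrite mulSnr (big_cat_nat (leq0n _) (leq_addr _ _)) IH big_nat_recr //=.
congr (_ * _).
rewrite big_ltn_cond; last by rewrite -addn1 leq_add2l.
rewrite dvdn_mull // big_nat_cond big1 ?muln1 // => i /andP[/andP[lo hi] pi].
exfalso; move: pi; rewrite -(subnKC (ltnW lo)) dvdn_addr ?dvdn_mull //.
move/dvdn_leq; lia.
Qed.

Lemma split_ff p Y s : 0 < p ->
  (Y*p) ^_ (s*p) = p^s * Y ^_ s * \prod_(0 <= i < s*p | ~~ (p %| i)) (Y*p - i).
Proof.
move=> p0; rewrite ffact_prod (bigID (fun i => p %| i)) /= block //.
congr (_ * _).
rewrite (eq_bigr (fun j => p * (Y - j))); last by move=> j _; rewrite -mulnBl mulnC.
by rewrite big_split /= prod_nat_const_nat subn0 ffact_prod.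
Qed.
Lemma arith1 X k i : i < k -> k <= X -> (X-i)*(X-(k-i)) = (X-k)*X + i*(k-i).
Proof.
move=> h1 h2.
rewrite -(subnK h2) -(subnKC (ltnW h1)).
move: (X - k) (k - i) => a j.
rewrite addKn addnA addnK addnC addnA addnK.
nia.
Qed.

Lemma pair_prod p k X : prime p -> odd p -> p %| k -> 0 < k -> k <= X ->
 \prod_(0 <= i < k | ~~ (p %| i)) (X - i) =
 \prod_(0 <= i < k | ~~ (p %| i) && (2*i < k)) ((X - k)*X + i*(k - i)).
Proof.
move=> pp op pk k0 kX.
rewrite [LHS]big_ltn_cond // [RHS]big_ltn_cond // dvdn0 /=.
rewrite (bigID (fun i => 2*i < k)) /=.
have E: \prod_(1<=i<k | ~~ (p %| i) && ~~(2*i<k)) (X-i) =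
        \prod_(1<=i<k | ~~ (p %| i) && (2*i<k)) (X - (k - i)).
  rewrite big_nat_rev big_nat_cond [RHS]big_nat_cond.
  apply: congr_big => // i.
    case: (boolP (1 <= i < k)) => //= /andP[h1 h2].
    have ->: 1 + k - i.+1 = k - i by lia.
    rewrite dvdn_subr ?(ltnW h2) //.
    case pi: (p %| i) => //=.
    have: 2*i != k.
      apply/eqP=> e; move: pi; rewrite -[p %| i](@Gauss_dvdr p 2 i) ?e ?pk //.
      by rewrite coprimen2.
    move=> ne; rewrite -leqNgt; apply/idP/idP => ?; lia.
rewrite E -big_split /= big_nat_cond [RHS]big_nat_cond.
apply: eq_bigr => i /andP[/andP[_ hi] _].
exact: arith1.
Qed.

Lemma prod_mod D (r : seq nat) (P : pred nat) (F : nat -> nat) :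
  \prod_(i <- r | P i) (D + F i) = \prod_(i <- r | P i) F i %[mod D].
Proof.
apply: (big_ind2 (fun x y => x = y %[mod D])) => //.
  by move=> x1 x2 y1 y2 e1 e2; rewrite -modnMm e1 e2 modnMm.
by move=> i _; rewrite modnDl.
Qed.
Lemma cancel_mod a b w d : coprime d w -> a*w = b*w %[mod d] -> a = b %[mod d].
Proof.
move=> cw.
wlog le: a b / b <= a.
  move=> H; case: (leqP b a) => [/H//|/ltnW ba] e; symmetry; exact: H.
move/eqP; rewrite eqn_mod_dvd ?leq_mul2r ?le ?orbT // -mulnBl Gauss_dvdl //.
by rewrite -eqn_mod_dvd // => /eqP.
Qed.

Theorem lemma2p10 (p r m s : nat) :
  prime p -> odd p -> 0 < r -> 0 < m -> s < m * p ^ r.-1 ->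
  'C(m * p ^ r, s * p) = 'C(m * p ^ r.-1, s) %[mod p ^ (2 * r)].
Proof.
move=> pp op r0 m0.
set N := m * p ^ r.-1.
have p0 : 0 < p by exact: prime_gt0.
have eM : m * p ^ r = N * p by rewrite /N -mulnA -expnSr prednK.
rewrite eM => sN.
case: (posnP s) => [->|s0]; first by rewrite mul0n !bin0.
set k := s * p.
have k0 : 0 < k by rewrite muln_gt0 s0.
have kM : k <= N * p by rewrite leq_mul2r ltnW ?orbT.
set WM := \prod_(0 <= i < k | ~~ (p %| i)) (N * p - i).
set Wk := \prod_(0 <= i < k | ~~ (p %| i)) (k - i).
have H : 'C(N * p, k) * Wk = 'C(N, s) * WM.
  have h1 := bin_ffact (N * p) k.
  rewrite -ffactnn /k !split_ff // -!/k -/WM -/Wk ffactnn -bin_ffact in h1.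
  apply/eqP; rewrite -(@eqn_pmul2l (p ^ s * s`!)) ?muln_gt0 ?expn_gt0 ?p0 ?fact_gt0 //.
  apply/eqP; transitivity ('C(N * p, k) * (p ^ s * s`! * Wk)); first nia.
  rewrite h1; nia.
have pk : p %| k by rewrite dvdn_mull.
have EM := pair_prod pp op pk k0 kM.
have Ek := pair_prod pp op pk k0 (leqnn k).
rewrite subnn mul0n in Ek.
have EW : WM = Wk %[mod (N * p - k) * (N * p)].
  rewrite /WM /Wk EM Ek; apply: prod_mod.
have H2 : 'C(N * p, k) * Wk = 'C(N, s) * Wk %[mod 'C(N, s) * ((N * p - k) * (N * p))].
  by rewrite H -!muln_modr EW.
have dv : p ^ (2 * r) %| 'C(N, s) * ((N * p - k) * (N * p)).
  have ->: 'C(N, s) * ((N * p - k) * (N * p)) = (m * m * 'C(N.-1, s)) * p ^ (2 * r).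
    have e1 : 'C(N, s) * (N - s) = N * 'C(N.-1, s) by rewrite mulnC mul_bin_down.
    rewrite /k -mulnBl.
    transitivity ('C(N, s) * (N - s) * p * (N * p)); first nia.
    rewrite e1 /N.
    have ->: p ^ (2 * r) = p ^ r.-1 * p * (p ^ r.-1 * p) by rewrite -expnSr prednK // mul2n -addnn expnD.
    nia.
  exact: dvdn_mull.
have H3 : 'C(N * p, k) * Wk = 'C(N, s) * Wk %[mod p ^ (2 * r)].
  by rewrite -(modn_dvdm _ dv) H2 modn_dvdm.
apply: cancel_mod H3.
rewrite /Wk big_nat_cond; apply big_ind; first exact: coprimen1.
  by move=> x y hx hy; rewrite coprimeMr hx hy.
move=> i /andP[/andP[_ hi] pi].
rewrite coprime_pexpl ?muln_gt0 // prime_coprime // dvdn_subr ?pk //; exact: ltnW.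
Qed.
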